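(* Let $X\subseteq\{0,1\}^n$ be a nonempty set, let $U\subseteq\mathbb{R}^{n+1}$ be a nonempty compact set, and define $f(x):=\max_{(c_0,c)\in U}\, c^\top x+c_0$ for $x\in\mathbb{R}^n$. Consider an iteration $k$ of Algorithm SD-DROP (described in the context) in which the algorithm does not terminate. Let $L$ be an affine subspace of $\mathbb{R}^n$ containing $x^k$ such that (i) the restriction $f|_L$ is differentiable at $x^k$, (ii) $\dim(L\cap\operatorname{aff}(V^{k+1}))\ge 1$, and (iii) $c^k$ is not orthogonal to $L\cap\operatorname{aff}(V^{k+1})$. Then $f(x^{k+1})<f(x^k)$.
   Context: For a convex function $f$, $\partial f(x)$ denotes its subdifferential at $x$. For a convex set $C$ and $x\in C$, $\mathcal{N}_C(x)=\{d\in\mathbb{R}^n: d^\top(y-x)\le 0\ \forall y\in C\}$ is the normal cone of $C$ at $x$; $\operatorname{aff}$ denotes affine hull. ''$c^k$ not orthogonal to $L\cap\operatorname{aff}(V^{k+1})$'' means $c^k$ is not orthogonal to the linear subspace parallel to this affine set. Algorithm SD-DROP: pick any $\hat x^0\in X$ and set $V^1=\{\hat x^0\}$. For $k=1,2,\dots$: compute $\alpha^k\in\mathbb{R}^{V^k}_+$ with $\sum_{v\in V^k}\alpha^k_v=1$, the point $x^k=\sum_{v\in V^k}\alpha^k_v v$, and a vector $c^k\in\partial f(x^k)\cap(-\mathcal{N}_{\operatorname{conv}(V^k)}(x^k))$ (so $x^k$ minimizes $f$ over $\operatorname{conv}(V^k)$); then compute a minimizer $\hat x^k$ of $\min_{x\in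 X}(c^k)^\top x$. If $(c^k)^\top\hat x^k\ge (c^k)^\top x^k$, stop and output $x^k$; otherwise set $V^{k+1}:=\{v\in V^k:\alpha^k_v>0\}\cup\{\hat x^k\}$ and continue. *)

(* Defs.v *)
From HB Require Import structures.
From mathcomp Require Import all_boot all_order all_algebra.
From mathcomp Require Import all_classical all_reals all_analysis.
Set Implicit Arguments.
Unset Strict Implicit.
Unset Printing Implicit Defensive.
Import Order.TTheory GRing.Theory Num.Theory.
Import numFieldNormedType.Exports.
Local Open Scope ring_scope.
Local Open Scope classical_set_scope.

Section SDDROP.
Variables (R : realType) (n : nat).

Definition dotp (u v : 'rV[R]_n) : R := (u *m v^T) 0 0.
Definition enorm (u : 'rV[R]_n) : R := Num.sqrt (dotp u u).

Definition binary_vec (x : 'rV[R]_n) : Prop := forall i, x 0 i = 0 \/ x 0 i = 1.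

(* f(x) = max_{(c0,c) in U} c^T x + c0  (a max when U is compact nonempty) *)
Definition fmax (U : set (R * 'rV[R]_n)) (x : 'rV[R]_n) : R :=
  sup [set dotp u.2 x + u.1 | u in U].

Definition subdiff (f : 'rV[R]_n -> R) (x : 'rV[R]_n) : set 'rV[R]_n :=
  [set g | forall y, f x + dotp g (y - x) <= f y].

Definition normal_cone (C : set 'rV[R]_n) (x : 'rV[R]_n) : set 'rV[R]_n :=
  [set d | forall y, C y -> dotp d (y - x) <= 0].

Definition conv_hull (V : seq 'rV[R]_n) : set 'rV[R]_n :=
  [set x | exists a : 'rV[R]_n -> R, (forall v, v \in V -> 0 <= a v) /\
      \sum_(v <- V) a v = 1 /\ x = \sum_(v <- V) a v *: v].

Definition aff_hull (V : seq 'rV[R]_n) : set 'rV[R]_n :=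
  [set x | exists a : 'rV[R]_n -> R,
      \sum_(v <- V) a v = 1 /\ x = \sum_(v <- V) a v *: v].

Definition affine_set (A : set 'rV[R]_n) : Prop :=
  A !=set0 /\ forall x y (t : R), A x -> A y -> A ((1 - t) *: x + t *: y).

Definition direction (A : set 'rV[R]_n) : set 'rV[R]_n :=
  [set d | exists x y, A x /\ A y /\ d = y - x].

(* dim A >= m : the parallel subspace contains m linearly independent vectors *)
Definition affdim_ge (A : set 'rV[R]_n) (m : nat) : Prop :=
  exists M : 'M[R]_(m, n), row_free M /\ forall i, direction A (row i M).

Definition restr_differentiable_at (f : 'rV[R]_n -> R) (L : set 'rV[R]_n)
    (x : 'rV[R]_n) : Prop :=
  exists g : 'rV[R]_n, forall eps : R, 0 < eps ->
    exists2 delta : R, 0 < delta &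
      forall y, L y -> enorm (y - x) < delta ->
        `|f y - f x - dotp g (y - x)| <= eps * enorm (y - x).

End SDDROP.

(* Main.v *)
Require Import Defs.
From HB Require Import structures.
From mathcomp Require Import all_boot all_order all_algebra.
From mathcomp Require Import all_classical all_reals all_analysis.
From mathcomp Require Import ring lra.
Import Order.TTheory GRing.Theory Num.Theory.
Import numFieldNormedType.Exports.
Local Open Scope ring_scope.
Local Open Scope classical_set_scope.

Set Implicit Arguments.
Unset Strict Implicit.
Section H.
Variables (R : realType) (n : nat).
Implicit Types u v w : 'rV[R]_n.

Lemma dotpE u v : dotp u v = \sum_j u 0 j * v 0 j.
Proof. by rewrite /dotp mxE; apply: eq_bigr => j _; rewrite mxE. Qed.

Lemma dotpDr u v w : dotp u (v + w) = dotp u v + dotp u w.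
Proof. rewrite !dotpE -big_split /=; apply: eq_bigr => j _; rewrite mxE; ring. Qed.
Lemma dotpBr u v w : dotp u (v - w) = dotp u v - dotp u w.
Proof. rewrite !dotpE -sumrB /=; apply: eq_bigr => j _; rewrite !mxE; ring. Qed.
Lemma dotpZr u k v : dotp u (k *: v) = k * dotp u v.
Proof. rewrite !dotpE mulr_sumr; apply: eq_bigr => j _; rewrite !mxE; ring. Qed.
Lemma dotpZl u k v : dotp (k *: u) v = k * dotp u v.
Proof. rewrite !dotpE mulr_sumr; apply: eq_bigr => j _; rewrite !mxE; ring. Qed.
Lemma dotpNl u v : dotp (- u) v = - dotp u v.
Proof. rewrite !dotpE -sumrN; apply: eq_bigr => j _; rewrite !mxE; ring. Qed.
Lemma dotpNr u v : dotp u (- v) = - dotp u v.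
Proof. rewrite !dotpE -sumrN; apply: eq_bigr => j _; rewrite !mxE; ring. Qed.
Lemma dotp0r u : dotp u 0 = 0.
Proof. rewrite dotpE big1 // => j _; rewrite mxE; ring. Qed.
Lemma dotpxx_ge0 u : 0 <= dotp u u.
Proof. rewrite dotpE; apply: sumr_ge0 => j _; exact: sqr_ge0. Qed.

Lemma dotp_sumr (T : Type) u (s : seq T) (F : T -> 'rV[R]_n) :
  dotp u (\sum_(x <- s) F x) = \sum_(x <- s) dotp u (F x).
Proof.
elim: s => [|x s IH]; first by rewrite !big_nil dotp0r.
by rewrite !big_cons dotpDr IH.
Qed.

Lemma enormZ k u : enorm (k *: u) = `|k| * enorm u.
Proof.
rewrite /enorm dotpZl dotpZr mulrA -expr2 sqrtrM ?sqr_ge0 //.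
by rewrite sqrtr_sqr.
Qed.

Lemma enorm_ge0 u : 0 <= enorm u.
Proof. exact: sqrtr_ge0. Qed.

Lemma psum_seq_eq0 (T : eqType) (s : seq T) (F : T -> R) :
  (forall x, x \in s -> 0 <= F x) -> \sum_(x <- s) F x = 0 ->
  forall x, x \in s -> F x = 0.
Proof.
elim: s => [|y s IH] //= H; rewrite big_cons => Hs x.
have Hy : 0 <= F y by apply: H; rewrite mem_head.
have Hs0 : 0 <= \sum_(x <- s) F x.
  by rewrite big_seq; apply: sumr_ge0 => z zs; apply: H; rewrite in_cons zs orbT.
have [E1 E2] : F y = 0 /\ \sum_(x <- s) F x = 0.
  by split; apply/eqP; rewrite eq_le; apply/andP; split; try lra.
rewrite in_cons => /orP [/eqP -> //|xs].
apply: IH => // z zs; apply: H; by rewrite in_cons zs orbT.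
Qed.

Lemma sum_indicator (T : eqType) (s : seq T) (F : T -> 'rV[R]_n) (v : T) :
  uniq s -> v \in s -> \sum_(w <- s) (w == v)%:R *: F w = F v.
Proof.
elim: s => [|y s IH] //= /andP [ys us]; rewrite big_cons in_cons => /orP [/eqP Ev|vs].
  rewrite Ev eqxx scale1r big_seq big1 ?addr0 // => w ws.
  have -> : (w == y) = false by apply/eqP => E; move: ys; rewrite -E ws.
  by rewrite mulr0n scale0r.
have -> : (y == v) = false by apply/eqP => E; move: ys; rewrite E vs.
by rewrite mulr0n scale0r add0r IH.
Qed.

Lemma sum_indicatorR (T : eqType) (s : seq T) (v : T) :
  uniq s -> v \in s -> \sum_(w <- s) ((w == v)%:R : R) = 1.
Proof.
elim: s => [|y s IH] //= /andP [ys us]; rewrite big_cons in_cons => /orP [/eqP Ev|vs].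
  rewrite Ev eqxx big_seq big1 ?addr0 // => w ws.
  have -> : (w == y) = false by apply/eqP => E; move: ys; rewrite -E ws.
  by rewrite mulr0n.
have -> : (y == v) = false by apply/eqP => E; move: ys; rewrite E vs.
by rewrite mulr0n add0r IH.
Qed.

Lemma small_pos (T : eqType) (s : seq T) (p q : T -> R) :
  (forall x, x \in s -> 0 < p x) ->
  exists2 t0, 0 < t0 & forall t, 0 <= t <= t0 -> forall x, x \in s -> 0 <= p x + t * q x.
Proof.
elim: s => [|y s IH] H.
  by exists 1 => // t _ x.
have [t1 t1p Ht1] : exists2 t0, 0 < t0 & forall t, 0 <= t <= t0 -> forall x, x \in s -> 0 <= p x + t * q x.
  by apply: IH => x xs; apply: H; rewrite in_cons xs orbT.
have py : 0 < p y by apply: H; rewrite mem_head.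
set th := p y / (`|q y| + 1).
have thp : 0 < th by rewrite divr_gt0 // ltr_wpDl.
exists (Num.min t1 th); first by rewrite lt_min t1p thp.
move=> t /andP [t0 tle] x; rewrite in_cons => /orP [/eqP ->|xs].
  have tth : t <= th by apply: le_trans tle _; rewrite ge_min lexx orbT.
  have e1 : th * (`|q y| + 1) = p y by rewrite /th divfK // gt_eqF // ltr_wpDl.
  have : t * (`|q y| + 1) <= p y by rewrite -e1 ler_wpM2r // addr_ge0.
  have : - (t * `|q y|) <= t * q y.
    rewrite -mulrN ler_wpM2l //. by rewrite lerNl ler_normr lexx orbT.
  nra.
apply: Ht1 => //; rewrite t0 /=; apply: le_trans tle _; by rewrite ge_min lexx.
Qed.


Lemma affine_dir (L : set 'rV[R]_n) x y z t : affine_set L -> L x -> L y -> L z ->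
  L (z + t *: (y - x)).
Proof.
case=> _ H Lx Ly Lz.
have Lz1 := H x y t Lx Ly.
have Lw := H z _ (1/2) Lz Lz1.
have := H x _ 2 Lx Lw.
congr L; apply/rowP => j; rewrite !mxE; by field.
Qed.

Lemma sum_Vk1 (T : lmodType R) (Vk : seq 'rV[R]_n) (ak : 'rV[R]_n -> R) xhk (F : 'rV[R]_n -> T) :
  (forall v, v \in Vk -> 0 <= ak v) -> xhk \notin [seq v <- Vk | 0 < ak v] ->
  \sum_(v <- rcons [seq v <- Vk | 0 < ak v] xhk) (if v == xhk then 0 else ak v) *: F v
  = \sum_(v <- Vk) ak v *: F v.
Proof.
move=> H0 nx; rewrite big_rcons /= eqxx scale0r addr0.
rewrite big_seq_cond.
under eq_bigr => v /andP [vp _] do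
  (have -> : (v == xhk) = false by apply/eqP => E; move: nx; rewrite -E vp); rewrite /=.
rewrite -big_seq_cond big_filter big_mkcond /=.
apply: eq_big_seq => v vk; case: ifP => // /negbT.
have := H0 v vk; rewrite lt_neqAle => -> /=; rewrite andbT negbK => /eqP <-.
by rewrite scale0r.
Qed.


Lemma sum_Vk1R (Vk : seq 'rV[R]_n) (ak : 'rV[R]_n -> R) xhk :
  (forall v, v \in Vk -> 0 <= ak v) -> xhk \notin [seq v <- Vk | 0 < ak v] ->
  \sum_(v <- rcons [seq v <- Vk | 0 < ak v] xhk) (if v == xhk then 0 else ak v)
  = \sum_(v <- Vk) ak v.
Proof.
move=> H0 nx; rewrite big_rcons /= eqxx addr0.
rewrite big_seq_cond.
under eq_bigr => v /andP [vp _] do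
  (have -> : (v == xhk) = false by apply/eqP => E; move: nx; rewrite -E vp); rewrite /=.
rewrite -big_seq_cond big_filter big_mkcond /=.
apply: eq_big_seq => v vk; case: ifP => // /negbT.
have := H0 v vk; rewrite lt_neqAle => -> /=; rewrite andbT negbK => /eqP <-.
by [].
Qed.

End H.

Theorem lemma3 (R : realType) (n : nat)
  (X : set 'rV[R]_n) (U : set (R * 'rV[R]_n))
  (hX0 : X !=set0) (hXbin : forall x, X x -> binary_vec x)
  (hU0 : U !=set0) (hUc : compact U)
  (* state at iteration k *)
  (Vk : seq 'rV[R]_n) (hVk : uniq Vk) (hVkX : forall v, v \in Vk -> X v)
  (ak : 'rV[R]_n -> R) (hak0 : forall v, v \in Vk -> 0 <= ak v)
  (hak1 : \sum_(v <- Vk) ak v = 1)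
  (xk : 'rV[R]_n) (hxk : xk = \sum_(v <- Vk) ak v *: v)
  (ck : 'rV[R]_n) (hck : subdiff (fmax U) xk ck)
  (hckN : normal_cone (conv_hull Vk) xk (- ck))
  (xhk : 'rV[R]_n) (hxhk : X xhk)
  (hxhk_min : forall x, X x -> dotp ck xhk <= dotp ck x)
  (* no termination *)
  (hnostop : dotp ck xhk < dotp ck xk)
  (* V^{k+1} = {v in V^k : alpha_v > 0} u {xhat^k} *)
  (Vk1 : seq 'rV[R]_n)
  (hVk1 : Vk1 = undup (rcons [seq v <- Vk | 0 < ak v] xhk))
  (* iteration k+1: alpha^{k+1}, x^{k+1}, c^{k+1} *)
  (ak1 : 'rV[R]_n -> R) (hak10 : forall v, v \in Vk1 -> 0 <= ak1 v)
  (hak11 : \sum_(v <- Vk1) ak1 v = 1)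
  (xk1 : 'rV[R]_n) (hxk1 : xk1 = \sum_(v <- Vk1) ak1 v *: v)
  (ck1 : 'rV[R]_n) (hck1 : subdiff (fmax U) xk1 ck1)
  (hck1N : normal_cone (conv_hull Vk1) xk1 (- ck1))
  (* the affine subspace L *)
  (L : set 'rV[R]_n) (hL : affine_set L) (hLx : L xk)
  (hdiff : restr_differentiable_at (fmax U) L xk)
  (hdim : affdim_ge (L `&` aff_hull Vk1) 1)
  (horth : exists d, direction (L `&` aff_hull Vk1) d /\ dotp ck d != 0) :
  fmax U xk1 < fmax U xk.
Proof.
set f := fmax U.
have hge : forall v, v \in Vk -> 0 <= dotp ck (v - xk).
  move=> v vk.
  have cv : conv_hull Vk v.
    exists (fun w => (w == v)%:R); split; first by move=> w _; rewrite ler0n.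
    split; first exact: sum_indicatorR.
    by rewrite (sum_indicator (fun w => w)).
  have := hckN v cv; rewrite dotpNl; lra.
have hzero : forall v, v \in Vk -> 0 < ak v -> dotp ck (v - xk) = 0.
  have S0 : \sum_(v <- Vk) ak v * dotp ck (v - xk) = 0.
    under eq_bigr => v _ do rewrite dotpBr mulrBr.
    rewrite sumrB -mulr_suml hak1 mul1r.
    under eq_bigr => v _ do rewrite -dotpZr.
    by rewrite -dotp_sumr -hxk subrr.
  move=> v vk akp.
  have hnn : forall x, x \in Vk -> 0 <= ak x * dotp ck (x - xk).
    move=> x xk'; apply: mulr_ge0; [exact: hak0|exact: hge].
  have := psum_seq_eq0 hnn S0 vk.
  move=> /eqP; rewrite mulf_eq0 gt_eqF //= => /eqP //.
set Vp := [seq v <- Vk | 0 < ak v].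
have nx : xhk \notin Vp.
  apply/negP; rewrite mem_filter => /andP [akp xv].
  have := hzero _ xv akp; rewrite dotpBr; lra.
have eV : Vk1 = rcons Vp xhk.
  rewrite hVk1 undup_id // rcons_uniq nx /=; exact: filter_uniq.
have key : forall (e : 'rV[R]_n -> R) d, \sum_(v <- Vk1) e v = 0 ->
    d = \sum_(v <- Vk1) e v *: v -> (forall t, L (xk + t *: d)) -> dotp ck d < 0 ->
    f xk1 < f xk.
  move=> e d e0 ed Ld cdneg.
  have cdE : dotp ck d = e xhk * dotp ck (xhk - xk).
    have : \sum_(v <- Vk1) e v * dotp ck (v - xk) = dotp ck d.
      under eq_bigr => v _ do rewrite dotpBr mulrBr.
      rewrite sumrB -mulr_suml e0 mul0r subr0 ed dotp_sumr.
      by apply: eq_bigr => v _; rewrite dotpZr.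
    rewrite eV big_rcons /= big_seq big1 ?add0r //.
    move=> v; rewrite mem_filter => /andP [akp vk]; by rewrite hzero // mulr0.
  have cx : dotp ck (xhk - xk) < 0 by rewrite dotpBr; lra.
  have sp : 0 < e xhk by rewrite cdE in cdneg; nra.
  have hp : forall v, v \in Vp -> 0 < ak v by move=> v; rewrite mem_filter => /andP [].
  have [t0 t0p Ht0] := small_pos e hp.
  case: hdiff => g Hg.
  set N := enorm d.
  have N0 : 0 <= N := enorm_ge0 d.
  pose C := dotp ck d.
  have Cneg : C < 0 by exact: cdneg.
  have N1 : 0 < 4 * (N + 1) by lra.
  set eps := - C / (4 * (N + 1)).
  have epsp : 0 < eps by rewrite /eps divr_gt0 //; lra.
  have epsE : eps * (4 * (N + 1)) = - C by rewrite /eps divfK // gt_eqF.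
  have [del delp Hdel] := Hg eps epsp.
  have Np : 0 < N + 1 by lra.
  set tau := Num.min t0 (del / (N + 1)).
  have taup : 0 < tau by rewrite lt_min t0p divr_gt0.
  have taut0 : tau <= t0 by rewrite ge_min lexx.
  have taudel : tau * N < del.
    have h1 : tau <= del / (N + 1) by rewrite ge_min lexx orbT.
    have h2 : del / (N + 1) * (N + 1) = del by rewrite divfK // gt_eqF.
    nra.
  have cv : conv_hull Vk1 (xk + tau *: d).
    exists (fun v => (if v == xhk then 0 else ak v) + tau * e v); split.
      move=> v; rewrite eV mem_rcons in_cons => /orP [/eqP ->|vp].
        rewrite eqxx add0r; apply: mulr_ge0; exact: ltW.
      have -> : (v == xhk) = false by apply/eqP => E; move: nx; rewrite -E vp.
      by apply: Ht0 vp; rewrite taut0 andbT ltW.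
    split.
      by rewrite big_split /= -mulr_sumr e0 mulr0 addr0 eV sum_Vk1R.
    rewrite (eq_bigr (fun v => (if v == xhk then 0 else ak v) *: v + tau *: (e v *: v))); last first.
      by move=> v _; rewrite scalerDl scalerA.
    rewrite big_split /= -scaler_sumr -ed eV.
    by rewrite (@sum_Vk1 R n _ Vk ak xhk (fun v => v)) // hxk.
  have hy := hck1N _ cv; rewrite dotpNl in hy.
  have fy := hck1 (xk + tau *: d).
  have ey : xk + tau *: d - xk = tau *: d by rewrite addrC addKr.
  have ey' : xk + (- tau) *: d - xk = (- tau) *: d by rewrite addrC addKr.
  have d1 := Hdel _ (Ld tau).
  rewrite ey enormZ gtr0_norm // -/N dotpZr in d1.
  have /d1 := taudel; rewrite ler_norml => /andP [d1a d1b].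
  have d2 := Hdel _ (Ld (- tau)).
  rewrite ey' enormZ normrN gtr0_norm // -/N dotpZr in d2.
  have /d2 := taudel; rewrite ler_norml => /andP [d2a d2b].
  have hk := hck (xk + (- tau) *: d); rewrite ey' dotpZr -/C in hk.
  have tC : tau * C = - 4 * (eps * (tau * N)) - 4 * (eps * tau).
    by rewrite -[C]opprK -epsE; ring.
  have p1 : 0 < eps * tau by apply: mulr_gt0.
  have p2 : 0 <= eps * (tau * N) by apply: mulr_ge0; [exact: ltW| apply: mulr_ge0 => //; exact: ltW].
  rewrite /f; lra.
case: horth => d [[x1 [y1 [[Lx1 [b' [b'1 ex1]]] [[Ly1 [b [b1 ey1]]] ed]]]] cd].
have Ld : forall t, L (xk + t *: d) by move=> t; rewrite ed; exact: affine_dir.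
have e0 : \sum_(v <- Vk1) (b v - b' v) = 0 by rewrite sumrB b1 b'1 subrr.
have edE : d = \sum_(v <- Vk1) (b v - b' v) *: v.
  by rewrite ed ey1 ex1 -sumrB; apply: eq_bigr => v _; rewrite scalerBl.
have [cneg|cpos] := ltP (dotp ck d) 0; first exact: (key _ _ e0 edE Ld cneg).
apply: (key (fun v => - (b v - b' v)) (- d)).
- by rewrite sumrN e0 oppr0.
- by rewrite edE -sumrN; apply: eq_bigr => v _; rewrite scaleNr.
- by move=> t; rewrite scalerN -scaleNr.
- rewrite dotpNr oppr_lt0 lt_neqAle cpos andbT eq_sym; exact: cd.
Qed.
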